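(* Let $p$ be a prime and $n\ge 3$. Every covering group $H$ of $\mathrm{UT}_n(\mathbb F_p)$ is a stem group, i.e. $Z(H)\le[H,H]$.
   Context: $\mathrm{UT}_n(\mathbb F_p)$ is the group of upper unitriangular $n\times n$ matrices over $\mathbb F_p$. A covering group of a finite group $G$ is a group $H$ with a subgroup $A\le Z(H)\cap[H,H]$ and $H/A\cong G$, of maximal order among such extensions (equivalently $|A|=|H_2(G,\mathbb Z)|$). *)

(* Defs.v *)
From HB Require Import structures.
From mathcomp Require Import all_boot all_order all_algebra all_fingroup all_solvable.
Set Implicit Arguments. Unset Strict Implicit. Unset Printing Implicit Defensive.
Import GRing.Theory.
Local Open Scope ring_scope.

Definition unitriangular (R : nzRingType) (m : nat) (M : 'M[R]_m) : bool :=
  [forall i : 'I_m, forall j : 'I_m, (M i j == (i == j)%:R) || (i < j)%N].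

(* UT_n(F_p) as a set of elements of GL_n(F_p) = {'GL_n['F_p]}
   (whose carrier is 'M['F_p]_(n.-1.+1); this is 'M_n for n >= 1). *)
Definition UT_set (n p : nat) : {set {'GL_n['F_p]}} :=
  [set g : {'GL_n['F_p]} | unitriangular (GLval g)].

Lemma UT_group_set n p : group_set (UT_set n p).
Proof.
apply/group_setP; split.
  rewrite inE; apply/forallP => i; apply/forallP => j.
  by rewrite GL_1E !mxE eqxx.
move=> x y; rewrite !inE => /forallP Hx /forallP Hy.
apply/forallP => i; apply/forallP => j; rewrite GL_MxE.
case: (ltnP i j) => [_|Hji]; first by rewrite orbT.
rewrite orbF !mxE (bigD1 i) //= big1 => [|k Hk].
  have /forallP/(_ j) := Hx i; have /forallP/(_ j) := Hy i.
  have /forallP/(_ i) := Hx i.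
  rewrite eqxx ltnn !orbF => /eqP ->; rewrite mul1r addr0.
  case: (eqVneq i j) => [<-|Hij]; first by rewrite ltnn !orbF.
  by rewrite ltnNge Hji !orbF.
have /forallP/(_ k) := Hx i; have /forallP/(_ j) := Hy k.
rewrite [i == k]eq_sym (negbTE Hk) /= => HY HX.
case: (ltnP i k) => Hik.
  have Hkj : (j < k)%N by apply: leq_ltn_trans Hji Hik.
  move: HY; rewrite ltnNge (ltnW Hkj) orbF.
  have -> : (k == j) = false by apply/negbTE; rewrite neq_ltn Hkj orbT.
  by move=> /eqP ->; rewrite mulr0.
move: HX; rewrite ltnNge Hik orbF => /eqP ->; by rewrite mul0r.
Qed.

Canonical UT_group n p := group (UT_group_set n p).

Notation UT n p := (UT_group n p).

Local Open Scope group_scope.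

Definition stem_ext (gT rT : finGroupType) (H A : {group gT}) (G : {set rT})
  : bool :=
  (A \subset 'Z(H) :&: [~: H, H]) && ((H / A) \isog G).

Definition covering_group (gT rT : finGroupType) (H : {group gT})
  (G : {set rT}) : Prop :=
  (exists A : {group gT}, stem_ext H A G) /\
  (forall (kT : finGroupType) (K B : {group kT}),
      stem_ext K B G -> (#|K| <= #|H|)%N).

Definition stem_group (gT : finGroupType) (H : {group gT}) : bool :=
  'Z(H) \subset [~: H, H].

(* Main.v *)
Require Import Defs.
From mathcomp Require Import all_boot all_order all_algebra all_fingroup all_solvable.
From mathcomp Require Import zify.
Import GRing.Theory.

Section S.
Variables (p m : nat).
Local Notation M := ('M['F_p]_m.+1).
Local Notation GL := {'GL_m.+1['F_p]}.
Local Open Scope ring_scope.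

Definition tv (i j : 'I_m.+1) (c : 'F_p) : GL :=
  insubd (1%g : GL) (1%:M + c *: delta_mx i j : M).

Lemma tvE i j c : i != j -> GLval (tv i j c) = 1%:M + c *: delta_mx i j.
Proof.
move=> ij; rewrite /tv val_insubd.
case: ifP => // /negP[]; suff /mulmx1_unit[] : (1%:M + c *: delta_mx i j) *m (1%:M - c *: delta_mx i j) = 1%:M :> M by [].
rewrite mulmxBr mulmx1 mulmxDl mul1mx -scalemxAl -scalemxAr mul_delta_mx_0 1?eq_sym //.
by rewrite !scaler0 addr0 addrK.
Qed.

Lemma tvE' {i j : 'I_m.+1} c : i != j -> val (tv i j c) = 1%:M + c *: delta_mx i j.
Proof. exact: tvE. Qed.

Lemma valM (u v : GL) : val (u * v)%g = val u *m val v.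
Proof. by []. Qed.

Global Opaque tv.

Lemma mx_delta_r (A : M) (k l i j : 'I_m.+1) :
  (A *m delta_mx k l) i j = A i k * (j == l)%:R.
Proof.
rewrite mxE (bigD1 k) //= big1 ?addr0 => [|r rk]; first by rewrite !mxE eqxx.
by rewrite !mxE (negPf rk) mulr0.
Qed.

Lemma mx_delta_l (A : M) (k l i j : 'I_m.+1) :
  (delta_mx k l *m A) i j = (i == k)%:R * A l j.
Proof.
rewrite mxE (bigD1 l) //= big1 ?addr0 => [|r rk]; first by rewrite !mxE eqxx andbT.
by rewrite !mxE (negPf rk) andbF mul0r.
Qed.

Lemma tv_UT (i j : 'I_m.+1) c : (i < j)%N -> tv i j c \in UT m.+1 p.
Proof.
move=> ij; rewrite inE tvE; last by rewrite neq_ltn ij.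
apply/forallP => a; apply/forallP => b; rewrite !mxE.
case: (ltnP a b) => ab; first by rewrite orbT.
have: ~~ ((a == i) && (b == j)).
  apply/negP => /andP[/eqP ai /eqP bj]; subst; by rewrite leqNgt ij in ab.
by move/negPf->; rewrite mulr0 addr0 eqxx.
Qed.

Lemma tv_comm (h : (1 < m)%N) c :
  tv ord0 ord_max c = [~ tv ord0 (inord 1) 1%R, tv (inord 1) ord_max c]%g.
Proof.
have e1 : nat_of_ord (inord 1 : 'I_m.+1) = 1%N by rewrite inordK // ltnW.
have d01 : (ord0 : 'I_m.+1) != inord 1 by apply/eqP => /(congr1 val) /=; rewrite e1.
have d1m : (inord 1 : 'I_m.+1) != ord_max.
  by apply/eqP => /(congr1 val) /=; rewrite e1 => e; rewrite -e in h.
have d0m : (ord0 : 'I_m.+1) != ord_max.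
  by apply/eqP => /(congr1 val) /= e; rewrite -e in h.
have := tvE' 1 d01; have := tvE' c d1m; have := tvE' c d0m.
move: (tv ord0 (inord 1) 1%R) (tv (inord 1) ord_max c) (tv ord0 ord_max c).
move=> a b z Ez Eb Ea.
have E : (b * a * z = a * b)%g.
  apply: val_inj; rewrite [LHS]valM [X in X *m _]valM [RHS]valM Ea Eb Ez.
  have dm0 : (ord_max : 'I_m.+1) != ord0 by rewrite eq_sym.
  have d10 : (inord 1 : 'I_m.+1) != ord0 by rewrite eq_sym.
  have dm1 : (ord_max : 'I_m.+1) != inord 1 by rewrite eq_sym.
  rewrite scale1r !mulmxDl !mulmxDr !mul1mx !mulmx1 -!scalemxAl -!scalemxAr.
  rewrite !mulmxDl !mul1mx -!scalemxAl !mul_delta_mx_cond !eqxx ?(negPf dm0) ?(negPf d10) ?(negPf dm1) ?(negPf d01) ?(negPf d0m) ?(negPf d1m).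
  rewrite ?mulr0n ?mulr1n ?scaler0 ?addr0 ?scalemx0.
  rewrite mul0mx scaler0 add0r scaler0 addr0.
  rewrite -!addrA; congr (_ + _).
  by rewrite [RHS]addrC -addrA.
rewrite /commg /conjg -[z](mulKg (b * a)%g) E invMg; rewrite [RHS]mulgA; reflexivity.
Qed.

Lemma comm_step (z : GL) (k : 'I_m.+1) (km : (k < m)%N) :
  (z \in 'C(UT m.+1 p))%g ->
  let k1 : 'I_m.+1 := inord k.+1 in
  delta_mx k k1 *m val z = val z *m delta_mx k k1.
Proof.
move=> /centP Cz k1.
have ek1 : nat_of_ord k1 = k.+1 by rewrite inordK.
have kk1 : (k < k1)%N by rewrite ek1.
have dk : k != k1 by rewrite neq_ltn kk1.
have := Cz _ (@tv_UT k k1 1%R kk1); have := tvE' 1 dk.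
move: (tv k k1 1) => g Eg Cg.
have := congr1 val Cg; rewrite !valM Eg scale1r mulmxDl mulmxDr mul1mx mulmx1.
by move/addrI.
Qed.

Lemma center_form (z : GL) : (1 < m)%N -> (z \in 'Z(UT m.+1 p))%g ->
  val z = 1%:M + (val z ord0 ord_max) *: delta_mx ord0 ord_max.
Proof.
move=> hm /setIP[Gz Cz].
have col (k : 'I_m.+1) i : (k < m)%N -> i != k -> val z i k = 0.
  move=> km ik; have := @comm_step z k km Cz => /= /matrixP /(_ i (inord k.+1)).
  by rewrite mx_delta_r mx_delta_l (negPf ik) mul0r eqxx mulr1.
have row (k : 'I_m.+1) j : (k < m)%N -> j != inord k.+1 -> val z (inord k.+1) j = 0.
  move=> km jk; have := @comm_step z k km Cz => /= /matrixP /(_ k j).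
  by rewrite mx_delta_r mx_delta_l (negPf jk) mulr0 eqxx mul1r.
move: Gz; rewrite inE => /forallP UTz.
apply/matrixP => i j; rewrite !mxE.
have /forallP/(_ j) := UTz i.
case: (ltnP i j) => ij; last first.
  rewrite orbF => /eqP ->.
  case: (i =P ord0) => [i0|]; last by rewrite mulr0 addr0.
  have -> : (j == ord_max) = false.
    apply/negbTE; apply/eqP => jm; move: ij; rewrite jm i0 /= leqn0.
    by move=> /eqP m0; rewrite m0 in hm.
  by rewrite andbF mulr0 addr0.
move=> _; have nij : (i == j) = false by apply/negbTE; rewrite neq_ltn ij.
rewrite nij add0r.
case: (posnP i) => [i0|ipos].
  have -> : i = ord0 by apply: val_inj.
  rewrite eqxx /=.
  case: (j =P ord_max) => [->|jm]; first by rewrite mulr1.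
  rewrite mulr0; apply: col; last by rewrite neq_ltn /= -i0 ij.
  have := ltn_ord j; rewrite ltnS leq_eqVlt => /orP[/eqP e|//]; case: jm; exact: val_inj.
have ki : (i.-1 < m)%N.
  by have := ltn_ord j; lia.
set k : 'I_m.+1 := inord i.-1.
have ek : nat_of_ord k = i.-1 by rewrite inordK // ltnS ltnW.
have ei : i = inord k.+1 by apply: val_inj; rewrite /= ek prednK // inordK.
have -> : (i == ord0) = false by apply/negbTE; rewrite -lt0n.
rewrite mulr0 ei; apply: row; first by rewrite ek.
by rewrite -ei neq_ltn ij orbT.
Qed.
End S.

Local Open Scope group_scope.

Lemma ZUT (p m : nat) : prime p -> (2 < m.+1)%N ->
  'Z(UT m.+1 p) \subset (UT m.+1 p)^`(1).
Proof.
move=> _ hm; apply/subsetP => z Zz.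
have := @center_form p m z hm Zz; set c := val z ord0 ord_max => Ez.
have d0m : (ord0 : 'I_m.+1) != ord_max by rewrite neq_ltn /=; apply/orP; left; lia.
have -> : z = @tv p m ord0 ord_max c by apply: val_inj; rewrite (@tvE' p m _ _ c d0m).
have e1 : nat_of_ord (inord 1 : 'I_m.+1) = 1%N by rewrite inordK // ltnW.
rewrite (@tv_comm p m hm c); apply: mem_commg; apply: (@tv_UT p m); rewrite e1 //.
Qed.

Theorem mainTheorem14 (p n : nat) (p_prime : prime p) (n_ge3 : (3 <= n)%N)
  (gT : finGroupType) (H : {group gT}) :
  covering_group H (UT n p) -> stem_group H.
Proof.
case=> [[A /andP[sA iso]] _]; rewrite /stem_group.
case: n n_ge3 iso => [//|m] hm iso.
have ZG := @ZUT p m p_prime hm.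
have sAZ : A \subset 'Z(H) by move: sA; rewrite subsetI => /andP[].
have sAD : A \subset [~: H, H] by move: sA; rewrite subsetI => /andP[].
have nAH : H \subset 'N(A).
  apply: subset_trans (cent_sub A); rewrite centsC.
  by apply: subset_trans sAZ _; exact: subsetIr.
case/isogP: iso => f injf fE.
have ZQ : 'Z(H / A) \subset (H / A)^`(1).
  rewrite -(injmSK injf) ?(subset_trans (center_sub _)) //; last first.
  rewrite injm_center // fE morphim_der // fE //.
have nAZ : 'Z(H) \subset 'N(A) by apply: subset_trans nAH; exact: center_sub.
rewrite -(quotientSGK nAZ sAD).
have -> : [~: H, H] / A = (H / A)^`(1) by rewrite -quotient_der.
apply: subset_trans ZQ.
rewrite /center subsetI quotientS ?subsetIl //=.
apply: subset_trans (quotient_cent _ _); exact: quotientS (subsetIr _ _).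
Qed.
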